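(* Let $\mathcal{X},\mathcal{Y}$ be finite, $P_X$ a distribution, $P_{Y|X}$ a channel with output $P_Y$, and let $M$ be a positive integer and $\mathscr{C}_M^n=\{X_1^n,\dots,X_M^n\}$ a codebook of $M$ independent codewords drawn from $P_{X^n}$. Fix $y^n\in\mathcal{T}^n_{Q_{\bar Y}}$ with $P_{Y^n}(y^n)>0$ and a conditional type $Q_{\bar X|\bar Y}\in\mathcal{P}_n(\mathcal{X}|Q_{\bar Y})$, let $Q_{\bar X\bar Y}=Q_{\bar X|\bar Y}Q_{\bar Y}$, $(\bar X,\bar Y)\sim Q_{\bar X\bar Y}$ and $x^n_{Q_{\bar X|\bar Y}}\in\mathcal{T}^n_{Q_{\bar X|\bar Y}}(y^n)$. Then \[ P_{Y^n}(y^n)\,\mathbb{E}\big[|Z_{Q_{\bar X\bar Y}}-\mathbb{E}[Z_{Q_{\bar X\bar Y}}]|\big]\le P_{Y^n|X^n}(y^n|x^n_{Q_{\bar X|\bar Y}})\,\mathfrak{Y}(M,Q_{\bar X\bar Y})=\exp\big(-n\,\mathbb{E}[\imath_{P_{Y|X}}(\bar Y|\bar X)]\big)\,\mathfrak{Y}(M,Q_{\bar X\bar Y}). \]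
   Context: $P_{X^n},P_{Y^n}$ are i.i.d. extensions of $P_X,P_Y$; $P_{Y^n|X^n}(y^n|x^n)=\prod_iP_{Y|X}(y_i|x_i)$. For an $n$-type $Q_{\bar Y}$, $\mathcal{T}^n_{Q_{\bar Y}}$ is its type class. A conditional type of $x^n$ given $y^n$ is $Q_{\bar X|\bar Y}$ with $Q_{\bar X|\bar Y}(a|b)Q_{\bar Y}(b)$ equal to the joint empirical distribution of $(x^n,y^n)$; $\mathcal{P}_n(\mathcal{X}|Q_{\bar Y})$ is the set of such conditional types and $\mathcal{T}^n_{Q_{\bar X|\bar Y}}(y^n)$ the set of $x^n$ with that conditional type given $y^n$. Define $N_{Q_{\bar X|\bar Y}}(y^n)=\sum_{j=1}^M1\{X_j^n\in\mathcal{T}^n_{Q_{\bar X|\bar Y}}(y^n)\}$, $p_{Q_{\bar X|\bar Y}}(y^n)=\mathbb{P}[X^n\in\mathcal{T}^n_{Q_{\bar X|\bar Y}}(y^n)]$ for $X^n\sim P_{X^n}$, $l_{Q_{\bar X|\bar Y}}(y^n)=P_{Y^n|X^n}(y^n|x^n_{Q_{\bar X|\bar Y}})/P_{Y^n}(y^n)$, $Z_{Q_{\bar X\bar Y}}=\frac1MN_{Q_{\bar X|\bar Y}}(y^n)\,l_{Q_{\bar X|\bar Y}}(y^n)$, and $\mathfrak{Y}(M,Q_{\bar X\bar Y})=\min\{2p_{Q_{\bar X|\bar Y}}(y^n),\,M^{-1/2}p_{Q_{\bar X|\bar Y}}^{1/2}(y^n)\}$. $\imath_{P_{Y|X}}(y|x)=\log\frac1{P_{Y|X}(y|x)}$;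 logs and exps use a common base. *)

(* Defs.v *)
From HB Require Import structures.
From mathcomp Require Import all_boot all_order all_algebra.
From mathcomp Require Import reals ereal exp.
Set Implicit Arguments. Unset Strict Implicit. Unset Printing Implicit Defensive.
Import Order.TTheory GRing.Theory Num.Theory.
Local Open Scope ring_scope.

Section Defs.
Variables (R : realType) (X Y : finType).

Definition is_distr (P : X -> R) := (forall a, 0 <= P a) /\ \sum_a P a = 1.
Definition is_channel (W : X -> Y -> R) :=
  (forall a b, 0 <= W a b) /\ (forall a, \sum_b W a b = 1).
Definition outY (PX : X -> R) (W : X -> Y -> R) (b : Y) : R :=
  \sum_a PX a * W a b.

Variable n : nat.
Definition iidX (PX : X -> R) (x : {ffun 'I_n -> X}) : R := \prod_i PX (x i).
Definition iidY (PY : Y -> R) (y : {ffun 'I_n -> Y}) : R := \prod_i PY (y i).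
Definition chan_n (W : X -> Y -> R) (y : {ffun 'I_n -> Y}) (x : {ffun 'I_n -> X})
  : R := \prod_i W (x i) (y i).

Definition typeY (y : {ffun 'I_n -> Y}) (b : Y) : R :=
  #|[set i | y i == b]|%:R / n%:R.
Definition jtype (x : {ffun 'I_n -> X}) (y : {ffun 'I_n -> Y}) (a : X) (b : Y)
  : R := #|[set i | (x i == a) && (y i == b)]|%:R / n%:R.

Definition ctype_class (Q : X -> Y -> R) (y : {ffun 'I_n -> Y})
  : {set {ffun 'I_n -> X}} :=
  [set x | [forall a, [forall b, Q a b * typeY y b == jtype x y a b]]].
(* Q is a conditional type given y^n, i.e. Q \in P_n(X | Q_{Y}) with Q_Y the type of y *)
Definition is_ctype (Q : X -> Y -> R) (y : {ffun 'I_n -> Y}) :=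
  exists x : {ffun 'I_n -> X}, forall a b, Q a b * typeY y b = jtype x y a b.

Variable M : nat.
(* random codebook of M independent codewords drawn from P_{X^n} *)
Definition codebook := {ffun 'I_M -> {ffun 'I_n -> X}}.
Definition Ecb (PX : X -> R) (f : codebook -> R) : R :=
  \sum_(c : codebook) (\prod_j iidX PX (c j)) * f c.

Definition NQ (Q : X -> Y -> R) (y : {ffun 'I_n -> Y}) (c : codebook) : nat :=
  #|[set j | c j \in ctype_class Q y]|.
Definition pQ (PX : X -> R) (Q : X -> Y -> R) (y : {ffun 'I_n -> Y}) : R :=
  \sum_(x in ctype_class Q y) iidX PX x.
Definition lQ PX W (y : {ffun 'I_n -> Y}) (xQ : {ffun 'I_n -> X}) : R :=
  chan_n W y xQ / iidY (outY PX W) y.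
Definition ZQ PX W Q y xQ (c : codebook) : R :=
  (NQ Q y c)%:R / M%:R * lQ PX W y xQ.
Definition frakY PX Q y : R :=
  Num.min (2 * pQ PX Q y) (Num.sqrt (pQ PX Q y / M%:R)).

Definition idens (W : X -> Y -> R) (a : X) (b : Y) : \bar R :=
  if 0 < W a b then (- ln (W a b))%:E else +oo%E.
(* E[imath(Ybar|Xbar)] with (Xbar,Ybar) ~ Q_{XY} = Q_{X|Y} Q_Y *)
Definition E_idens W (Q : X -> Y -> R) (y : {ffun 'I_n -> Y}) : \bar R :=
  (\sum_a \sum_b ((Q a b * typeY y b)%:E * idens W a b))%E.
End Defs.
Arguments ZQ {R X Y n} M PX W Q y xQ c.

(* Main.v *)
Require Import Defs.
From HB Require Import structures.
From mathcomp Require Import all_boot all_order all_algebra.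
From mathcomp Require Import reals ereal exp.
From mathcomp Require Import ring lra.
Import Order.TTheory GRing.Theory Num.Theory.
Local Open Scope ring_scope.

Section Expect.
Variables (R : realType) (X : finType) (n M : nat) (PX : X -> R).
Hypothesis PX0 : forall a, 0 <= PX a.
Hypothesis PX1 : \sum_a PX a = 1.
Variable A : {set {ffun 'I_n -> X}}.

Let E := @Ecb R X n M PX.
Let ind (x : {ffun 'I_n -> X}) : R := (x \in A)%:R.
Let p := \sum_(x in A) iidX PX x.

Lemma iidX_ge0 (x : {ffun 'I_n -> X}) : 0 <= iidX PX x.
Proof. by apply: prodr_ge0 => i _. Qed.

Lemma sum_iidX : \sum_(x : {ffun 'I_n -> X}) iidX PX x = 1.
Proof.
rewrite /iidX -(bigA_distr_bigA (fun (i : 'I_n) a => PX a)) /=.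
by rewrite big1 // => i _.
Qed.

Lemma Ecb_prod (h : 'I_M -> {ffun 'I_n -> X} -> R) :
  E (fun c => \prod_l h l (c l)) = \prod_l \sum_x iidX PX x * h l x.
Proof.
rewrite /E /Ecb (bigA_distr_bigA (fun l x => iidX PX x * h l x)).
by apply: eq_bigr => c _; rewrite big_split.
Qed.

Lemma Ecb_ext f g : (forall c, f c = g c) -> E f = E g.
Proof. by move=> fg; rewrite /E /Ecb; apply: eq_bigr => c _; rewrite fg. Qed.

Lemma Ecb_lin a b f g :
  E (fun c => a * f c + b * g c) = a * E f + b * E g.
Proof.
rewrite /E /Ecb !mulr_sumr -big_split /=; apply: eq_bigr => c _.
by rewrite mulrDr !mulrA ![_ * a]mulrC ![_ * b]mulrC.
Qed.

Lemma Ecb_cst a : E (fun _ => a) = a.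
Proof.
rewrite (Ecb_ext _ (fun c => a * \prod_(l : 'I_M) (fun _ _ => 1) l (c l) + 0 * 0)); last first.
  by move=> c; rewrite big1 ?mulr1 ?mulr0 ?addr0.
rewrite (Ecb_lin a 0 _ (fun _ => 0)) mul0r addr0 (Ecb_prod (fun _ _ => 1)).
by rewrite big1 ?mulr1 // => l _; under eq_bigr do rewrite mulr1; rewrite sum_iidX.
Qed.

Lemma Ecb_scale a f : E (fun c => a * f c) = a * E f.
Proof. by rewrite /E /Ecb mulr_sumr; apply: eq_bigr => c _; rewrite mulrCA. Qed.

Lemma Ecb_lin3 a b d f g :
  E (fun c => a * f c + b * g c + d) = a * E f + b * E g + d.
Proof.
rewrite (Ecb_ext _ (fun c => 1 * (fun c => a * f c + b * g c) c + d * (fun _ => 1) c)); last first.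
  by move=> c; rewrite mul1r mulr1.
by rewrite Ecb_lin Ecb_cst Ecb_lin mul1r mulr1.
Qed.

Lemma Ecb_sum (I : finType) (F : I -> codebook X n M -> R) :
  E (fun c => \sum_i F i c) = \sum_i E (F i).
Proof.
rewrite /E /Ecb exchange_big /=; apply: eq_bigr => c _; by rewrite mulr_sumr.
Qed.

Lemma Ecb_le f g : (forall c, f c <= g c) -> E f <= E g.
Proof.
move=> fg; rewrite /E /Ecb; apply: ler_sum => c _; apply: ler_wpM2l => //.
by apply: prodr_ge0 => j _; apply: iidX_ge0.
Qed.

Lemma p_ge0 : 0 <= p.
Proof. by apply: sumr_ge0 => x _; apply: iidX_ge0. Qed.

Lemma Ecb_set (S : {set 'I_M}) :
  E (fun c => \prod_(l in S) ind (c l)) = p ^+ #|S|.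
Proof.
rewrite (Ecb_ext _ (fun c => \prod_l (fun l x => if l \in S then ind x else 1) l (c l))); last first.
  by move=> c; rewrite big_mkcond.
rewrite (Ecb_prod (fun l x => if l \in S then ind x else 1)) -prodr_const [RHS]big_mkcond /=; apply: eq_bigr => l _.
case: ifP => _; last by under eq_bigr do rewrite mulr1; rewrite sum_iidX.
rewrite /p [RHS]big_mkcond /=; apply: eq_bigr => x _; rewrite /ind.
by case: (x \in A); rewrite ?mulr1 ?mulr0.
Qed.

Lemma Ecb_ind1 j : E (fun c => ind (c j)) = p.
Proof.
have := Ecb_set [set j]; rewrite cards1 expr1 => <-.
by apply: Ecb_ext => c; rewrite big_set1.
Qed.

Lemma Ecb_ind2 j k : E (fun c => ind (c j) * ind (c k)) = if j == k then p else p ^+ 2.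
Proof.
case: eqP => [<-|/eqP jk].
  rewrite -(Ecb_ind1 j); apply: Ecb_ext => c; rewrite /ind.
  by case: (c j \in A); rewrite ?mulr1 ?mulr0.
have := Ecb_set [set j; k]; rewrite cards2 jk => <-.
apply: Ecb_ext => c; rewrite big_setU1 ?big_set1 //= inE // eq_sym.
Qed.


Let S (c : codebook X n M) := \sum_j ind (c j).

Lemma ES : E S = M%:R * p.
Proof.
rewrite /S Ecb_sum; under eq_bigr do rewrite Ecb_ind1.
by rewrite sumr_const card_ord mulr_natl.
Qed.

Lemma ES2 : E (fun c => S c ^+ 2) = M%:R * p + M%:R * (M%:R - 1) * p ^+ 2.
Proof.
rewrite (Ecb_ext _ (fun c => \sum_j \sum_k ind (c j) * ind (c k))); last first.
  by move=> c; rewrite /S expr2 mulr_suml; apply: eq_bigr => j _; rewrite mulr_sumr.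
rewrite Ecb_sum; under eq_bigr do rewrite Ecb_sum.
under eq_bigr do under eq_bigr do rewrite Ecb_ind2.
have inner : forall j : 'I_M, \sum_k (if j == k then p else p ^+ 2) = p + (M%:R - 1) * p ^+ 2.
  move=> j; rewrite (bigD1 j) //= eqxx.
  rewrite (eq_bigr (fun _ => p ^+ 2)); last by move=> k; rewrite eq_sym => /negbTE ->.
  have h : \sum_(i < M) p ^+ 2 = p ^+ 2 + \sum_(i < M | i != j) p ^+ 2 by rewrite (bigD1 j).
  rewrite sumr_const card_ord /= in h.
  have -> : \sum_(i < M | i != j) p ^+ 2 = p ^+ 2 *+ M - p ^+ 2 by rewrite h; ring.
  rewrite -mulr_natl; ring.
under eq_bigr do rewrite inner.
rewrite sumr_const card_ord -mulr_natl; ring.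
Qed.

Hypothesis M0 : (0 < M)%N.

Lemma absdev : E (fun c => `|S c / M%:R - p|) <= Num.min (2 * p) (Num.sqrt (p / M%:R)).
Proof.
have Mp : 0 < M%:R :> R by rewrite ltr0n.
have S0 : forall c, 0 <= S c.
  by move=> c; apply: sumr_ge0 => j _; rewrite /ind ler0n.
have p0 := p_ge0.
have b1 : E (fun c => `|S c / M%:R - p|) <= 2 * p.
  apply: (le_trans (@Ecb_le _ (fun c => M%:R^-1 * S c + p * 1) _)).
    move=> c; rewrite mulr1 ler_norml; have := S0 c => Sc.
    have : 0 <= S c / M%:R by rewrite divr_ge0 // ltW.
    rewrite mulrC; lra.
  rewrite Ecb_lin ES Ecb_cst mulrA mulVf ?gt_eqF // mul1r; lra.
rewrite le_min b1 /=.
have [p00|pp] := eqVneq p 0.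
  by move: b1; rewrite p00 mulr0 mul0r sqrtr0.
have pp' : 0 < p by rewrite lt_neqAle eq_sym pp p0.
set t := Num.sqrt (p / M%:R).
have t0 : 0 < t by rewrite sqrtr_gt0 divr_gt0.
have tt : t ^+ 2 = p / M%:R by rewrite sqr_sqrtr // divr_ge0 // ltW.
apply: (le_trans (@Ecb_le _ (fun c => (2 * t)^-1 * (S c / M%:R - p) ^+ 2 + (t / 2) * 1) _)).
  move=> c; set u := S c / M%:R - p.
  rewrite -real_normK ?num_real //; set v := `|u|.
  rewrite -subr_ge0.
  have -> : (2 * t)^-1 * v ^+ 2 + t / 2 * 1 - v = (v - t) ^+ 2 / (2 * t).
    by field; rewrite gt_eqF.
  by rewrite divr_ge0 ?sqr_ge0 // mulr_ge0 // ltW.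
rewrite Ecb_lin Ecb_cst.
rewrite (Ecb_ext _ (fun c => (M%:R ^- 2) * S c ^+ 2 + (- 2 * p / M%:R) * S c + p ^+ 2)); last first.
  move=> c; field; by rewrite gt_eqF.
rewrite (Ecb_lin3 _ _ _ (fun c => S c ^+ 2) S) ES2 ES.
have V : M%:R ^- 2 * (M%:R * p + M%:R * (M%:R - 1) * p ^+ 2) +
  - 2 * p / M%:R * (M%:R * p) + p ^+ 2 = p / M%:R - p ^+ 2 / M%:R.
  by field; rewrite gt_eqF.
rewrite V -tt.
have : 0 <= p ^+ 2 / M%:R by rewrite divr_ge0 ?sqr_ge0 // ltW.
set w := p ^+ 2 / M%:R => w0.
rewrite -subr_ge0.
have -> : t - ((2 * t)^-1 * (t ^+ 2 - w) + t / 2 * 1) = w / (2 * t).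
  by field; rewrite gt_eqF.
by rewrite divr_ge0 // mulr_ge0 // ltW.
Qed.

End Expect.
Lemma part2 (R : realType) (X Y : finType) (W : X -> Y -> R) n
  (y : {ffun 'I_n -> Y}) (Q : X -> Y -> R) (xQ : {ffun 'I_n -> X}) :
  is_channel W -> xQ \in ctype_class Q y ->
  (chan_n W y xQ)%:E = expeR (- (n%:R)%:E * E_idens W Q y)%E.
Proof.
move=> [W0 W1s] hx.
have hQ : forall a b, Q a b * typeY R y b = jtype R xQ y a b.
  move=> a b; move: hx; rewrite inE => /forallP/(_ a)/forallP/(_ b)/eqP //.
have W1 : forall a b, W a b <= 1.
  move=> a b; rewrite -(W1s a) (bigD1 b) //= lerDl; exact: sumr_ge0.
have idens0 : forall a b, (0 <= idens W a b)%E.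
  move=> a b; rewrite /idens; case: ifP => // Wp.
  by rewrite lee_fin oppr_ge0 ln_le0.
case: n y xQ hx hQ => [|n] y xQ hx hQ.
  rewrite /chan_n big_ord0 /E_idens big1 ?mule0 ?expeR0 // => a _.
  by rewrite big1 // => b _; rewrite hQ /jtype invr0 mulr0 mul0e.
case: (boolP [forall i, 0 < W (xQ i) (y i)]) => hW; last first.
  move/forallPn: hW => [i0 hi0].
  have Wi0 : W (xQ i0) (y i0) = 0.
    by apply/eqP; rewrite eq_le W0 andbT leNgt.
  rewrite /chan_n (bigD1 i0) //= Wi0 mul0r.
  have nny : forall s : \bar R, (0 <= s)%E -> s != -oo%E by case.
  have -> : E_idens W Q y = +oo%E.
    rewrite /E_idens (bigD1 (xQ i0)) //= (bigD1 (y i0)) //=.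
    have -> : ((Q (xQ i0) (y i0) * typeY R y (y i0))%:E * idens W (xQ i0) (y i0))%E = +oo%E.
      rewrite /idens Wi0 ltxx gt0_muley // lte_fin hQ /jtype divr_gt0 //.
      by rewrite ltr0n card_gt0; apply/set0Pn; exists i0; rewrite inE !eqxx.
    rewrite addye ?addye //; apply: nny.
      by rewrite sume_ge0 // => a _; rewrite sume_ge0 // => b _; rewrite mule_ge0 // hQ /jtype lee_fin divr_ge0.
    by rewrite sume_ge0 // => b _; rewrite mule_ge0 // hQ /jtype lee_fin divr_ge0.
  rewrite EFinN mulNe gt0_muley ?lte_fin ?ltr0n //.
pose g a b := if 0 < W a b then - ln (W a b) else 0.
have term : forall a b, ((Q a b * typeY R y b)%:E * idens W a b)%E
                        = (jtype R xQ y a b * g a b)%:E.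
  move=> a b; rewrite hQ /idens /g; case: ifP => // Wp.
  suff -> : jtype R xQ y a b = 0 by rewrite mul0e mul0r.
  rewrite /jtype; apply/eqP; rewrite mulf_eq0 pnatr_eq0 cards_eq0; apply/orP; left.
  apply/eqP/setP => i; rewrite !inE; apply/negbTE/negP => /andP[/eqP ha /eqP hb].
  by move/forallP: hW => /(_ i); rewrite ha hb Wp.
rewrite /E_idens.
under eq_bigr do under eq_bigr do rewrite term.
rewrite (eq_bigr (fun a => (\sum_b jtype R xQ y a b * g a b)%:E)); last first.
  by move=> a _; rewrite sumEFin.
rewrite sumEFin -EFinN -EFinM /=.
congr (_%:E).
have key : n.+1%:R * (\sum_a \sum_b jtype R xQ y a b * g a b)
    = \sum_i g (xQ i) (y i).
  rewrite mulr_sumr.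
  under eq_bigr do rewrite mulr_sumr.
  have e1 : forall a b, n.+1%:R * (jtype R xQ y a b * g a b)
     = \sum_i (((xQ i == a) && (y i == b))%:R * g a b).
    move=> a b; rewrite /jtype mulrA mulrCA mulfV ?pnatr_eq0 // mulr1.
    rewrite -big_distrl /=; congr (_ * _).
    rewrite -sum1_card natr_sum big_mkcond /=; apply: eq_bigr => i _; rewrite inE; by case: (_ && _).
  under eq_bigr do under eq_bigr do rewrite e1.
  under eq_bigr do rewrite exchange_big.
  rewrite exchange_big /=; apply: eq_bigr => i _.
  rewrite (bigD1 (xQ i)) //= (bigD1 (y i)) //= !eqxx mul1r big1 ?addr0; last first.
    by move=> b /negbTE hb; rewrite eq_sym hb andbF mul0r.
  rewrite big1 ?addr0 // => a /negbTE ha; rewrite big1 // => b _.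
  by rewrite eq_sym ha mul0r.
rewrite mulNr key -sumrN expR_sum /chan_n; apply: eq_bigr => i _.
move/forallP: hW => /(_ i) hp; rewrite /g hp opprK lnK //.
Qed.

Theorem lemma3 (R : realType) (X Y : finType) (PX : X -> R) (W : X -> Y -> R)
  (n M : nat) (y : {ffun 'I_n -> Y}) (Q : X -> Y -> R) (xQ : {ffun 'I_n -> X}) :
  is_distr PX -> is_channel W -> (0 < M)%N ->
  0 < iidY (outY PX W) y ->
  is_ctype Q y -> xQ \in ctype_class Q y ->
  let Z := ZQ M PX W Q y xQ in
  let EZ := Ecb PX Z in
  iidY (outY PX W) y * Ecb PX (fun c => `|Z c - EZ|)
    <= chan_n W y xQ * frakY M PX Q y
  /\ ((chan_n W y xQ * frakY M PX Q y)%:E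
      = expeR (- (n%:R)%:E * E_idens W Q y) * (frakY M PX Q y)%:E)%E.
Proof.
move=> [PX0 PX1] Wc M0 PY0 _ hx Z EZ; split; last by rewrite EFinM (@part2 R X Y W n y Q xQ Wc hx).
set A := ctype_class Q y.
set L := lQ PX W y xQ.
set PY := iidY (outY PX W) y.
have Mp : 0 < M%:R :> R by rewrite ltr0n.
have ch0 : 0 <= chan_n W y xQ.
  by apply: prodr_ge0 => i _; case: Wc => W0 _; apply: W0.
have L0 : 0 <= L by rewrite /L /lQ divr_ge0 // ltW.
have NS : forall c : codebook X n M, (NQ Q y c)%:R = \sum_j ((c j \in A)%:R : R).
  move=> c; rewrite /NQ -sum1_card natr_sum [LHS]big_mkcond /=.
  by apply: eq_bigr => j _; rewrite inE; case: (_ \in _).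
have Zc : forall c, Z c = L / M%:R * \sum_j ((c j \in A)%:R : R) + 0 * 0.
  move=> c; rewrite /Z /ZQ NS -/L mulr0 addr0; ring.
have EZe : EZ = L * pQ PX Q y.
  rewrite /EZ (@Ecb_ext _ _ _ _ _ _ _ Zc) Ecb_lin.
  have := @ES _ _ _ _ _ PX1 A => /= ->.
  rewrite mul0r addr0 /pQ -/A mulrA mulfVK //; by rewrite gt_eqF.
rewrite (@Ecb_ext _ _ _ _ _ _ (fun c => L * `|(\sum_j ((c j \in A)%:R : R)) / M%:R - pQ PX Q y|)); last first.
  move=> c; rewrite EZe Zc mulr0 addr0 -mulrA -mulrBr normrM ger0_norm // [_^-1 * _]mulrC.
  by [].
have E1 := Ecb_scale R X n M PX L (fun c => `|(\sum_j ((c j \in A)%:R : R)) / M%:R - pQ PX Q y|); cbv beta in E1; rewrite E1 mulrA.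
have -> : PY * L = chan_n W y xQ by rewrite /L /lQ -/PY mulrC mulfVK // gt_eqF.
apply: ler_wpM2l => //.
have := @absdev _ _ _ _ _ PX0 PX1 A M0 => /=.
by rewrite /frakY /pQ.
Qed.
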